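(* Let $P$ denote the set of prime numbers, and let $Q \subseteq P$ be a random subset in which each prime $p$ is included independently with probability $1/2$. Define the completely multiplicative function $\lambda_Q : \mathbb{N} \to \{-1,1\}$ by $\lambda_Q(p) = -1$ if $p \in Q$, $\lambda_Q(p) = 1$ if $p \notin Q$, extended by $\lambda_Q(p_1^{e_1}\cdots p_k^{e_k}) = \lambda_Q(p_1)^{e_1}\cdots\lambda_Q(p_k)^{e_k}$. Fix an integer $k \ge 0$ and positive integers $i_1 < i_2 < \dots < i_k$, and set \[ T_N = \frac{1}{N}\sum_{n=1}^N \lambda_Q(n)\lambda_Q(n+i_1)\cdots\lambda_Q(n+i_k). \] Then there is a constant $C$ (depending only on $i_1,\dots,i_k$) such that $E(T_N^2) \le C N^{-0.05}$ for all $N \ge 1$, where $E$ denotes expectation over the random choice of $Q$.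
   Context: $\mathbb{N} = \{1,2,3,\dots\}$. *)

(* Defs.v *)
From HB Require Import structures.
From mathcomp Require Import all_boot all_order all_algebra.
From mathcomp Require Import all_classical all_reals all_analysis.
Set Implicit Arguments. Unset Strict Implicit. Unset Printing Implicit Defensive.
Import Order.TTheory GRing.Theory Num.Theory.
Local Open Scope ring_scope.

Definition lambdaQ {R : pzRingType} (Q : pred nat) (n : nat) : R :=
  \prod_(p <- primes n) (if Q p then (-1) ^+ logn p n else 1).

Definition TN {R : realType} (Q : pred nat) (ks : seq nat) (N : nat) : R :=
  N%:R^-1 * \sum_(1 <= n < N.+1)
              (lambdaQ Q n * \prod_(i <- ks) lambdaQ Q (n + i)%N).

(* E(T_N^2) over a random Q containing each prime independently with
   probability 1/2.  T_N only depends on Q restricted to {0,...,M-1} where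
   M = N + sum ks + 1 > N + max ks, so the expectation ks exactly the uniform
   average over all subsets S of {0,...,M-1} (the product measure's marginal;
   including non-primes as extra fair coins changes nothing). *)
Definition ETN2 {R : realType} (ks : seq nat) (N : nat) : R :=
  let M := (N + sumn ks).+1 in
  (2 ^+ M)^-1 *
    \sum_(S : {set 'I_M}) (TN (fun p => [exists i in S, val i == p]) ks N) ^+ 2.

(* Main.v *)
Require Import Defs.
From HB Require Import structures.
From mathcomp Require Import all_boot all_order all_algebra.
From mathcomp Require Import all_classical all_reals all_analysis.
From mathcomp Require Import zify ring lra.
Set Implicit Arguments. Unset Strict Implicit. Unset Printing Implicit Defensive.
Import Order.TTheory GRing.Theory Num.Theory.
Lemma size_add_divisors f d : size (PrimeDecompAux.add_divisors f d) = f.2.+1 * size d.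
Proof.
case: f => p e /=; elim: e => [|e IH] /=; first by rewrite mul1n.
by rewrite size_merge size_cat size_map IH mulSn addnC.
Qed.

Lemma size_foldr_div l : size (foldr PrimeDecompAux.add_divisors [:: 1] l) = \prod_(f <- l) f.2.+1.
Proof.
elim: l => [|f l IH]; first by rewrite big_nil.
by rewrite big_cons /= size_add_divisors IH.
Qed.

Lemma size_divisors n : size (divisors n) = \prod_(p <- primes n) (logn p n).+1.
Proof. by rewrite /divisors prime_decompE size_foldr_div big_map. Qed.

Lemma n_decomp n : 0 < n -> n = \prod_(p <- primes n) p ^ logn p n.
Proof.
move=> n0; rewrite {1}(prod_prime_decomp n0) prime_decompE big_map //.
Qed.
Lemma prodX (s : seq nat) F K : (\prod_(i <- s) F i) ^ K = \prod_(i <- s) F i ^ K.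
Proof. elim: s => [|a s IH]; first by rewrite !big_nil exp1n. by rewrite !big_cons expnMn IH. Qed.

Lemma expn_mono m n e : m <= n -> m ^ e <= n ^ e.
Proof. move=> H; elim: e => [|e IH]; first by []. by rewrite !expnS leq_mul. Qed.

Lemma pe_bound K p e : 0 < K -> 1 < p ->
  (e.+1) ^ K <= (if p < 2 ^ K then K ^ K else 1) * p ^ e.
Proof.
move=> K0 p1; case: ifP => Hp.
- have E := divn_eq e K.
  set q := e %/ K in E.
  have H1 : e.+1 <= K * 2 ^ q.
    have := ltn_expl q (isT : 1 < 2); have := ltn_pmod e K0. nia.
  apply: (leq_trans (expn_mono K H1)); rewrite expnMn leq_mul2l; apply/orP; right.
  rewrite -expnM; apply: (leq_trans _ (expn_mono e p1)).
  rewrite leq_exp2l //. nia.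
- rewrite mul1n; have H1 : e.+1 <= 2 ^ e by exact: ltn_expl.
  apply: (leq_trans (expn_mono K H1)); rewrite expnAC; apply: expn_mono.
  by rewrite leqNgt Hp.
Qed.

Lemma divisor_bound K n : 0 < K -> 0 < n ->
  size (divisors n) ^ K <= (K ^ K) ^ (2 ^ K) * n.
Proof.
move=> K0 n0; rewrite size_divisors prodX [X in _ <= _ * X](n_decomp n0).
have Hle : \prod_(p <- primes n) (logn p n).+1 ^ K <=
    \prod_(p <- primes n) ((if p < 2 ^ K then K ^ K else 1) * p ^ logn p n).
  rewrite big_seq_cond [X in _ <= X]big_seq_cond; apply: leq_prod => p /andP[Hp _].
  apply: pe_bound => //; move: Hp; rewrite mem_primes => /andP[/prime_gt1 //].
apply: (leq_trans Hle).
rewrite big_split /= leq_mul2r; apply/orP; right.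
rewrite -big_mkcond /= big_const_seq iter_muln_1; apply: leq_pexp2l; first by rewrite expn_gt0 K0.
rewrite -size_filter -[X in _ <= X](size_iota 0 (2 ^ K)).
apply: uniq_leq_size; first by apply: filter_uniq; apply: primes_uniq.
by move=> x; rewrite mem_filter mem_iota => /andP[].
Qed.

Lemma max_exists (P : pred nat) b : P 0 -> (forall j, P j -> j <= b) ->
  exists t, P t /\ forall j, P j -> j <= t.
Proof.
move=> P0 ub.
have exP : exists n, P n by exists 0.
case: (ex_maxnP exP ub) => t Pt H; by exists t.
Qed.

Lemma sq_decomp m : 0 < m -> exists s, [/\ 0 < s, s * s %| m &
   forall p, prime p -> ~~ (p * p %| m %/ (s * s))].
Proof.
move=> m0.
have P0 : (fun t => t.+1 * t.+1 %| m) 0 by rewrite /= muln1 dvd1n.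
have [t [Pt Ht]] := @max_exists (fun t => t.+1 * t.+1 %| m) m P0
   (fun j H => ltnW (leq_trans (leq_pmulr _ (ltn0Sn j)) (dvdn_leq m0 H))).
exists t.+1; split => // p pp; apply/negP => Hp.
have H2 : (p * t.+1) * (p * t.+1) %| m.
  rewrite -(divnK Pt) mulnACA; exact: dvdn_mul.
have H3 : p * t.+1 <= t.+1.
  have := Ht (p * t.+1).-1; rewrite prednK ?muln_gt0 ?(prime_gt0 pp) //; move/(_ H2); lia.
have := prime_gt1 pp; nia.
Qed.
Definition vp (ks : seq nat) p x := logn p x + \sum_(i <- ks) logn p (x + i).
Definition Xn (ks : seq nat) n := (sumn ks)`! * (n * \prod_(i <- ks) (n + i)).

Lemma mem_sumn (ks : seq nat) i : i \in ks -> i <= sumn ks.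
Proof.
elim: ks => [|a ks IH] //=; rewrite inE => /orP[/eqP->|/IH H]; first exact: leq_addr.
exact: (leq_trans H (leq_addl _ _)).
Qed.

Lemma Xn_gt0 ks n : 0 < n -> 0 < Xn ks n.
Proof.
move=> n0; rewrite /Xn muln_gt0 fact_gt0 muln_gt0 n0 /=.
by rewrite prodn_gt0 // => i; rewrite addn_gt0 n0.
Qed.

Lemma key ks m n M s : all (fun i => 0 < i) ks -> 0 < m -> m < M -> 0 < n ->
  (forall p, prime p -> p < M -> ~~ odd (vp ks p m + vp ks p n)) ->
  0 < s -> s * s %| m -> (forall p, prime p -> ~~ (p * p %| m %/ (s * s))) ->
  m %/ (s * s) %| Xn ks n.
Proof.
move=> kpos m0 mM n0 good s0 ssm sqf.
set d := m %/ (s * s).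
have md : m = d * (s * s) by rewrite divnK.
have d0 : 0 < d by move: m0; rewrite md muln_gt0 => /andP[].
apply/dvdn_partP => // p; rewrite inE mem_primes => /and3P[pp _ pd].
rewrite p_part.
have ld : logn p d = 1.
  have : 0 < logn p d by rewrite logn_gt0 mem_primes pp d0.
  have E2 : p * p = p ^ 2 by rewrite expnS expn1.
  have := sqf p pp; rewrite E2 pfactor_dvdn // -/d. lia.
rewrite ld expn1.
have pm : p %| m by rewrite md dvdn_mulr.
have lm : odd (logn p m).
  rewrite md lognM ?muln_gt0 ?s0 // lognM // ld addnn. by rewrite /= odd_double.
case: (leqP p (sumn ks)) => Hp.
  by apply: dvdn_mulr; apply: dvdn_fact; rewrite prime_gt0.
apply: dvdn_mull.
have vm : vp ks p m = logn p m.
  rewrite /vp big1_seq ?addn0 // => i /andP[_ iks].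
  apply: logn_coprime; rewrite prime_coprime //; apply/negP => pdi.
  have : p %| i by rewrite -(dvdn_addr i pm).
  have ipos : 0 < i by move/allP: kpos => /(_ i iks).
  move/(dvdn_leq ipos); have := mem_sumn iks; lia.
have pM : p < M by apply: leq_ltn_trans mM; apply: dvdn_leq.
have := good p pp pM; rewrite oddD vm lm /= negbK /vp.
case: (posnP (logn p n)) => [->|].
  rewrite add0n; case: (boolP (has (fun i => 0 < logn p (n + i)) ks)) => [/hasP[i iks]|].
    rewrite logn_gt0 mem_primes => /and3P[_ _ pdi] _.
    by rewrite (big_rem i) /=; [apply: dvdn_mull; apply: dvdn_mulr|].
  move=> /hasPn H; rewrite big1_seq // => i /andP[_ iks].
  by have := H i iks; rewrite lt0n negbK => /eqP.
rewrite logn_gt0 mem_primes => /and3P[_ _ pdn] _.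
by apply: dvdn_mulr.
Qed.
Lemma count_bound ks n N M t (G : pred nat) : all (fun i => 0 < i) ks -> N < M -> 0 < n ->
  t * t <= N -> (forall j, j * j <= N -> j <= t) ->
  (forall m, G m -> forall p, prime p -> p < M -> ~~ odd (vp ks p m + vp ks p n)) ->
  count G (iota 1 N) <= size (divisors (Xn ks n)) * t.
Proof.
move=> kpos NM n0 tt tmax HG.
rewrite -size_filter -(size_iota 1 t) -(size_allpairs (fun d s => d * (s * s))).
apply: (uniq_leq_size (s2 := [seq d * (s * s) | d <- divisors (Xn ks n), s <- iota 1 t])).
  by apply: filter_uniq; apply: iota_uniq.
move=> m; rewrite mem_filter mem_iota => /andP[Gm /andP[m1 mN]].
have m0 : 0 < m by [].
have [s [s0 ssm sqf]] := sq_decomp m0.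
have := key kpos m0 _ n0 (HG m Gm) s0 ssm sqf.
have mM : m < M by lia.
move/(_ mM) => dX.
have -> : m = m %/ (s * s) * (s * s) by rewrite divnK.
apply: allpairs_f; first by rewrite -dvdn_divisors // Xn_gt0.
rewrite mem_iota s0 /= add1n ltnS; apply: tmax.
by apply: (leq_trans (dvdn_leq m0 ssm)); lia.
Qed.
Lemma sqrt_exists N : exists t, t * t <= N /\ forall j, j * j <= N -> j <= t.
Proof. apply: (@max_exists (fun j => j * j <= N) N) => //= j; nia. Qed.

Lemma maxT (F : nat -> nat) K Bd N : 0 < K -> (forall n, 0 < n <= N -> F n ^ K <= Bd) ->
  exists T, T ^ K <= Bd /\ forall n, 0 < n <= N -> F n <= T.
Proof.
move=> K0; elim: N => [|N IH] H.
  by exists 0; split => [|n]; [rewrite exp0n | lia].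
have [T [TB HT]] : exists T, T ^ K <= Bd /\ forall n, 0 < n <= N -> F n <= T.
  by apply: IH => n Hn; apply: H; lia.
have HN := H N.+1 (ltac:(lia)).
case: (leqP T (F N.+1)) => HTF.
  exists (F N.+1); split => // n /andP[n0]; rewrite leq_eqVlt => /orP[/eqP->//|n1].
  apply: leq_trans HTF; apply: HT; lia.
exists T; split => // n /andP[n0]; rewrite leq_eqVlt => /orP[/eqP->|n1]; first exact: ltnW.
apply: HT; lia.
Qed.

Lemma Xn_bound ks n N : 0 < n -> n <= N ->
  Xn ks n <= (sumn ks)`! * ((sumn ks).+1 * N) ^ (size ks).+1.
Proof.
move=> n0 nN; rewrite /Xn leq_mul2l; apply/orP; right.
rewrite expnS; apply: leq_mul; first by nia.
rewrite -count_predT -iter_muln_1 -big_const_seq big_seq [X in _ <= X]big_seq.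
apply: leq_prod => i iks; have := mem_sumn iks; nia.
Qed.

Lemma nat_bound ks : all (fun i => 0 < i) ks -> exists B, forall N (G : nat -> pred nat), 0 < N ->
  (forall n m, 0 < n <= N -> G n m -> forall p, prime p -> p < (N + sumn ks).+1 ->
      ~~ odd (vp ks p m + vp ks p n)) ->
  (\sum_(1 <= n < N.+1) count (G n) (iota 1 N)) ^ 20 <= B * N ^ 39.
Proof.
move=> kpos.
set k1 := (size ks).+1.
set K := 20 * k1.
have K0 : 0 < K by [].
set B := (K ^ K) ^ (2 ^ K) * ((sumn ks)`! * (sumn ks).+1 ^ k1).
have B0 : 0 < B.
  by rewrite /B !muln_gt0 !expn_gt0 K0 fact_gt0.
exists B => N G N0 HG.
have [t [tt tmax]] := sqrt_exists N.
have HB : forall n, 0 < n <= N -> size (divisors (Xn ks n)) ^ K <= B * N ^ k1.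
  move=> n Hn /=; apply: (leq_trans (divisor_bound K0 (Xn_gt0 ks (_ : 0 < n)))); first by case/andP: Hn.
  rewrite /B -!mulnA leq_mul2l; apply/orP; right.
  apply: (leq_trans (Xn_bound ks (_ : 0 < n) (_ : n <= N))); try by case/andP: Hn.
  by rewrite expnMn mulnA.
have [T [TB HT]] := @maxT (fun n => size (divisors (Xn ks n))) K (B * N ^ k1) N K0 HB.
have Hsum : \sum_(1 <= n < N.+1) count (G n) (iota 1 N) <= \sum_(1 <= n < N.+1) T * t.
  rewrite big_nat [X in _ <= X]big_nat; apply: leq_sum => n Hn.
  have Hn' : 0 < n <= N by move: Hn; lia.
  apply: (leq_trans (count_bound (M := (N + sumn ks).+1) kpos _ _ tt tmax (fun m => HG n m Hn'))); try lia.
  by rewrite leq_mul2r HT ?orbT.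
rewrite sum_nat_const_nat subn1 /= in Hsum.
have T20 : T ^ 20 <= B * N ^ 9.
  rewrite -(leq_exp2r _ _ (isT : 0 < k1)) -expnM; apply: (leq_trans TB); rewrite expnMn.
  apply: leq_mul.
    by rewrite -{1}(expn1 B); apply: leq_pexp2l.
  rewrite -expnM mulnC expnM -{1}(expn1 (N ^ k1)); apply: leq_pexp2l => //; by rewrite expn_gt0 N0.
apply: (leq_trans (expn_mono 20 Hsum)).

have -> : N ^ 39 = N ^ 9 * N ^ 10 * N ^ 20 by rewrite -!expnD.
rewrite mulnC !expnMn mulnA; apply: leq_mul; last by [].
rewrite mulnA; apply: leq_mul => //.
have -> : t ^ 20 = (t * t) ^ 10 by rewrite expnMn -expnD.
exact: expn_mono.
Qed.
Local Open Scope ring_scope.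

Lemma lambda_flip (R : realType) (Q Q' : pred nat) p x : prime p ->
  (forall q, q != p -> Q' q = Q q) -> Q' p = ~~ Q p ->
  lambdaQ (R := R) Q' x = (-1) ^+ (logn p x) * lambdaQ Q x.
Proof.
move=> pp HQ HQp; rewrite /lambdaQ.
case: (boolP (p \in primes x)) => Hp.
  rewrite !(bigD1_seq p) ?primes_uniq //= mulrA; congr (_ * _).
    rewrite HQp; case: (Q p) => /=; last by rewrite mulr1.
    by rewrite -exprD -signr_odd addnn odd_double.
  by apply: eq_bigr => q /HQ ->.
have -> : logn p x = 0%N by apply/eqP; rewrite -leqn0 leqNgt logn_gt0.
rewrite expr0 mul1r; apply: eq_big_seq => q qx; rewrite HQ //.
by apply: contra Hp => /eqP <-.
Qed.

Definition fS (R : realType) (Q : pred nat) (ks : seq nat) (x : nat) : R :=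
  lambdaQ Q x * \prod_(i <- ks) lambdaQ Q (x + i)%N.

Lemma f_flip (R : realType) (Q Q' : pred nat) ks p x : prime p ->
  (forall q, q != p -> Q' q = Q q) -> Q' p = ~~ Q p ->
  fS R Q' ks x = (-1) ^+ (vp ks p x) * fS R Q ks x.
Proof.
move=> pp HQ HQp; rewrite /fS /vp (lambda_flip _ _ pp HQ HQp) exprD -mulrA -mulrA; congr (_ * _).
rewrite mulrCA; congr (_ * _).
elim: ks => [|a ks IH]; first by rewrite !big_nil mulr1.
rewrite !big_cons IH (lambda_flip _ _ pp HQ HQp) exprD.
by rewrite -!mulrA; congr (_ * _); rewrite mulrCA.
Qed.

Lemma norm_lambda (R : realType) Q x : `|lambdaQ (R := R) Q x| = 1.
Proof.
rewrite /lambdaQ normr_prod big1_seq // => p _; case: (Q p) => /=.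
  by rewrite normrX normrN1 expr1n.
exact: normr1.
Qed.

Lemma norm_fS (R : realType) Q ks x : `|fS R Q ks x| = 1.
Proof.
rewrite /fS normrM norm_lambda mul1r normr_prod big1_seq // => i _; exact: norm_lambda.
Qed.

Definition QS M (S : {set 'I_M}) : pred nat := fun p => [exists i in S, val i == p].
Definition tg M (p : 'I_M) (S : {set 'I_M}) := if p \in S then S :\ p else p |: S.

Lemma tgK M (p : 'I_M) : involutive (tg p).
Proof.
move=> S; rewrite /tg; case: (boolP (p \in S)) => pS.
  rewrite !inE eqxx /=; apply/setP => i; rewrite !inE; case: eqP => // ->; by rewrite pS.
rewrite !inE eqxx /=; apply/setP => i; rewrite !inE; case: eqP => // ->; by rewrite (negbTE pS).
Qed.

Lemma QS_tg_p M (p : 'I_M) S : QS (tg p S) (val p) = ~~ QS S (val p).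
Proof.
have E : forall T, QS T (val p) = (p \in T).
  move=> T; apply/existsP/idP => [[i /andP[iS /eqP/val_inj <-]] // | pS].
  by exists p; rewrite pS eqxx.
rewrite !E /tg; case: ifP => pS; by rewrite !inE eqxx.
Qed.

Lemma QS_tg_q M (p : 'I_M) S q : q != val p -> QS (tg p S) q = QS S q.
Proof.
move=> qp.
have E : forall i : 'I_M, val i == q -> (i \in tg p S) = (i \in S).
  move=> i /eqP iq; have ip : i != p by apply: contra qp => /eqP <-; rewrite iq.
  by rewrite /tg; case: ifP => _; rewrite !inE (negbTE ip).
apply/existsP/existsP => [[i /andP[iS iq]] | [i /andP[iS iq]]]; exists i.
  by rewrite -E // iS.
by rewrite E // iS.
Qed.

Lemma pair_sum (R : realType) ks M m n (p : 'I_M) : prime p -> odd (vp ks p m + vp ks p n) ->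
  \sum_(S : {set 'I_M}) fS R (QS S) ks m * fS R (QS S) ks n = 0.
Proof.
move=> pp Hodd.
set F := fun S : {set 'I_M} => fS R (QS S) ks m * fS R (QS S) ks n.
have HF : forall S, F (tg p S) = - F S.
  move=> S; rewrite /F !(f_flip _ _ _ pp (QS_tg_q S) (QS_tg_p p S)).
  rewrite mulrACA -exprD -signr_odd Hodd expr1 mulN1r //.
have := (reindex_inj (op := +%R) (x := 0) (P := predT) (F := F) (can_inj (tgK p))).
rewrite /=; under [X in _ = X -> _]eq_bigr => S _ do rewrite HF.
rewrite sumrN => H; lra.
Qed.

Definition Gd ks M m n := [forall p : 'I_M, prime p ==> ~~ odd (vp ks p m + vp ks p n)].

Lemma pair_bound (R : realType) ks M m n :
  \sum_(S : {set 'I_M}) fS R (QS S) ks m * fS R (QS S) ks n <= 2 ^+ M * (Gd ks M m n)%:R.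
Proof.
case: (boolP (Gd ks M m n)) => H.
  rewrite mulr1; apply: (le_trans (y := \sum_(S : {set 'I_M}) (1 : R))).
    apply: ler_sum => S _; apply: (le_trans (ler_norm _)).
    by rewrite normrM !norm_fS mulr1.
  rewrite sumr_const -cardsT -powersetT card_powerset cardsT card_ord.
  by rewrite -natrX.
move/forallPn: H => [p]; rewrite negb_imply negbK => /andP[pp po].
by rewrite (pair_sum R pp po) mulr0.
Qed.

Lemma count_real (R : realType) (a : pred nat) N :
  ((count a (iota 1 N))%:R : R) = \sum_(1 <= m < N.+1) (a m)%:R.
Proof.
rewrite -sum1_count natr_sum big_mkcond /index_iota subn1 /=.
by apply: eq_bigr => i _; case: (a i).
Qed.

Lemma ETN2_bound (R : realType) ks N : (0 < N)%N ->
  ETN2 (R := R) ks N <=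
  (\sum_(1 <= n < N.+1) count (fun m => Gd ks (N + sumn ks).+1 m n) (iota 1 N))%:R / N%:R ^+ 2.
Proof.
move=> N0; rewrite /ETN2 /=.
set M := (N + sumn ks).+1.
have TNe : forall S : {set 'I_M}, TN (fun p => [exists i in S, val i == p]) ks N =
   N%:R^-1 * \sum_(1 <= n < N.+1) fS R (QS S) ks n by [].
under eq_bigr => S _ do rewrite TNe exprMn [X in _ * X]expr2 big_distrlr /=.
rewrite -mulr_sumr exchange_big /=.
under eq_bigr => m _ do rewrite exchange_big /=.
rewrite natr_sum mulr_suml.
under [X in _ <= X]eq_bigr => n _ do rewrite count_real mulr_suml.
rewrite [X in _ <= X]exchange_big /= mulrA mulr_sumr; apply: ler_sum => m _.
rewrite mulr_sumr; apply: ler_sum => n _.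
rewrite exprVn; apply: (le_trans (ler_wpM2l _ (pair_bound R ks M m n))).
  by rewrite mulr_ge0 // invr_ge0 exprn_ge0.
rewrite le_eqVlt; apply/orP; left; apply/eqP.
have h1 : (2 : R) ^+ M != 0 by rewrite expf_neq0.
have h2 : (N%:R : R) ^+ 2 != 0 by rewrite expf_neq0 // pnatr_eq0 -lt0n.
by rewrite mulrACA mulVf // mul1r mulrC.
Qed.

Unset Implicit Arguments.

Theorem mainTheorem2 (R : realType) (ks : seq nat) :
  sorted ltn ks -> all (fun i => (0 < i)%N) ks ->
  exists C : R, forall N : nat, (1 <= N)%N ->
    ETN2 (R := R) ks N <= C * (N%:R `^ (- (1 / 20%:R))).
Proof.
move=> _ kpos; have [B HB] := nat_bound kpos.
exists ((B%:R : R) `^ (1 / 20%:R)) => N N1.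
have HGc := HB N (fun n m => Gd ks (N + sumn ks).+1 m n) N1.
have {HB} HGc : ((\sum_(1 <= n < N.+1) count (fun m => Gd ks (N + sumn ks).+1 m n) (iota 1 N)) ^ 20 <= B * N ^ 39)%N.
  apply: HGc => n m _ /forallP H p pp pM.
  by have /implyP := H (Ordinal pM); apply.
move: HGc (ETN2_bound R ks N1).
set Gc := (\sum_(1 <= n < N.+1) _)%N.
set E := ETN2 ks N => HGc HE.
have E0 : 0 <= E.
  rewrite /E /ETN2 /=; apply: mulr_ge0; first by rewrite invr_ge0 exprn_ge0.
  by apply: sumr_ge0 => S _; apply: sqr_ge0.
have N0 : (0 : R) < N%:R by rewrite ltr0n.
set y := _ * _.
have y0 : 0 <= y by rewrite /y mulr_ge0 // powR_ge0.
have HEN : E * N%:R ^+ 2 <= Gc%:R by rewrite -ler_pdivlMr // exprn_gt0.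
have H20 : (E * N%:R ^+ 2) ^+ 20 <= (B%:R : R) * N%:R ^+ 39.
  apply: (le_trans (y := (Gc%:R : R) ^+ 20)).
    by rewrite ler_pXn2r // ?nnegrE ?ler0n // mulr_ge0 // exprn_ge0 // ltW.
  by rewrite -natrX -natrX -natrM ler_nat.
have HE20 : E ^+ 20 * N%:R <= B%:R.
  rewrite -(ler_pM2r (exprn_gt0 39 N0)) -mulrA -exprS.
  by move: H20; rewrite exprMn -exprM.
have Hy : y ^+ 20 * N%:R = B%:R.
  rewrite /y exprMn -!powR_mulrn ?powR_ge0 // -!powRrM.
  have -> : 1 / 20%:R * 20%:R = 1 :> R by rewrite mul1r mulVf // pnatr_eq0.
  have -> : - (1 / 20%:R) * 20%:R = -1 :> R by rewrite mulNr mul1r mulVf // pnatr_eq0.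
  rewrite powRr1 ?ler0n // powR_inv1 ?ler0n // -mulrA mulVf ?mulr1 //.
  by rewrite gt_eqF.
rewrite -(ler_pXn2r (isT : (0 < 20)%N)) ?inE //.
by rewrite -(ler_pM2r N0) Hy.
Qed.
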